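(* For every lifted Bayesian network for conditional probability logic (LBN-CPL) $\mathfrak{G}$ over a relational signature $\sigma$ there is an LBN-CPL $\mathfrak{G}'$ over a relational signature $\sigma'\supseteq\sigma$ such that, for every finite domain $D$, the probability distribution on $\sigma$-structures with domain $D$ induced by $\mathfrak{G}$ equals the distribution of the $\sigma$-reducts of the structures under the distribution induced by $\mathfrak{G}'$, and such that every relation symbol $R\in\sigma'$ is either a root node of the graph of $\mathfrak{G}'$ or has only root nodes as parents, and in the latter case all probabilities $\mu(R\mid\chi_{R,i})$ associated with $R$ in $\mathfrak{G}'$ are $0$ or $1$.
   Context: Relational signatures are possibly multi-sorted, without equality; a finite domain assigns a finite set to each sort; $\sigma$-structures and sort-appropriate tuples are as usual. Conditional probability logic formulas (CPL) over $\sigma$: atomic formulas $R(t_1,\dots,t_n)$ with sort-appropriate variables or constants; closure under $\neg,\wedge,\vee,\rightarrow$ and $\forall_x,\exists_x$; and for any real $r\ge 0$, CPL formulas $\varphi,\psi,\theta,\tau$ and a tuple of distinct variables $\vec{y}$ (which become bound), the formulas $r+\|\varphi\mid\psi\|_{\vec{y}}\ge\|\theta\mid\tau\|_{\vec{y}}$ and $\|\varphi\mid\psi\|_{\vec{y}}\ge\|\theta\mid\tau\|_{\vec{y}}+r$. Semantics in a finite structure $\mathfrak{X}$ under an assignment $\iota$: first-order clauses as usual; writing $|\varphi|_{\vec{y},\iota}$ for the number of sort-appropriate tuples $\vec{b}$ with $\mathfrak{X}\models_{\iota_{\vec{y}:\vec{b}}}\varphi$, the formula $r+\|\varphi\mid\psi\|_{\vec{y}}\ge\|\theta\mid\tau\|_{\vec{y}}$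 holds iff $|\tau|_{\vec{y},\iota}>0$, $|\psi|_{\vec{y},\iota}>0$ and $r+\frac{|\varphi\wedge\psi|_{\vec{y},\iota}}{|\psi|_{\vec{y},\iota}}\ge\frac{|\theta\wedge\tau|_{\vec{y},\iota}}{|\tau|_{\vec{y},\iota}}$, and analogously for the other form. An LBN-CPL over $\sigma$ consists of: a directed acyclic graph $G$ with node set $\sigma$; for each $R\in\sigma$ a finite tuple $(\chi_{R,i}(\vec{x}))_{i\le\nu_R}$ of CPL formulas over the signature $\mathrm{par}(R)$ of $G$-parents of $R$ ($\vec{x}$ sort-appropriate of length the arity of $R$) such that $\forall\vec{x}\bigvee_i\chi_{R,i}(\vec{x})$ is true in all $\mathrm{par}(R)$-structures and $\exists\vec{x}(\chi_{R,i}(\vec{x})\wedge\chi_{R,j}(\vec{x}))$ is unsatisfiable for $i\ne j$; and for each $R$ and $i$ a number $\mu(R\mid\chi_{R,i})\in[0,1]$. On a finite domain $D$ it induces the distribution on $\sigma$-structures with domain $D$ given by the Bayesian network with nodes the ground atoms $R(\vec{a})$, an edge from $R_1(\vec{b})$ to $R_2(\vec{a})$ whenever $R_1\to R_2$ in $G$, and where $R(\vec{a})$ is true with probability $\mu(R\mid\chi_{R,i})$ for the unique $i$ such that $\chi_{R,i}(\vec{a})$ holds in the structure given by the parent values. Root nodes have no parents (their only partition is the formula ''true''). *)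

(* Defs.v *)
From HB Require Import structures.
From mathcomp Require Import all_boot all_order all_algebra.
From mathcomp Require Import reals.
Set Implicit Arguments.
Unset Strict Implicit.
Unset Printing Implicit Defensive.
Import Order.TTheory GRing.Theory Num.Theory.
Local Open Scope ring_scope.

Record signature (Srt : finType) := Signature {
  sym : finType;
  ar : sym -> seq Srt }.

(* Variables carry their sort: (name, sort). *)
Definition var (Srt : finType) := (nat * Srt)%type.

(* FCge1 r ys f1 f2 f3 f4  :  r + ||f1 | f2||_ys >= ||f3 | f4||_ys      *)
(* FCge2 r ys f1 f2 f3 f4  :  ||f1 | f2||_ys >= ||f3 | f4||_ys + r      *)
Inductive form (Srt : finType) (S : Type) (R : Type) :=
| FTrue
| FAtom of S & seq (var Srt)
| FNeg of form Srt S R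
| FAnd of form Srt S R & form Srt S R
| FOr of form Srt S R & form Srt S R
| FImp of form Srt S R & form Srt S R
| FAll of var Srt & form Srt S R
| FEx of var Srt & form Srt S R
| FCge1 of R & seq (var Srt) & form Srt S R & form Srt S R & form Srt S R & form Srt S R
| FCge2 of R & seq (var Srt) & form Srt S R & form Srt S R & form Srt S R & form Srt S R.

Arguments FTrue {Srt S R}.

Section Syntax.
Variables (Srt : finType) (sg : signature Srt) (R : realType).
Local Notation form := (form Srt (sym sg) R).

Fixpoint syms (f : form) : seq (sym sg) :=
  match f with
  | FTrue => [::]
  | FAtom s _ => [:: s]
  | FNeg g => syms g
  | FAnd g h | FOr g h | FImp g h => syms g ++ syms h
  | FAll _ g | FEx _ g => syms g
  | FCge1 _ _ f1 f2 f3 f4 | FCge2 _ _ f1 f2 f3 f4 =>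
      syms f1 ++ syms f2 ++ syms f3 ++ syms f4
  end.

Fixpoint fv (f : form) : seq (var Srt) :=
  match f with
  | FTrue => [::]
  | FAtom _ vs => vs
  | FNeg g => fv g
  | FAnd g h | FOr g h | FImp g h => fv g ++ fv h
  | FAll x g | FEx x g => filter (predC1 x) (fv g)
  | FCge1 _ ys f1 f2 f3 f4 | FCge2 _ ys f1 f2 f3 f4 =>
      filter (predC (mem ys)) (fv f1 ++ fv f2 ++ fv f3 ++ fv f4)
  end.

Fixpoint wf (f : form) : bool :=
  match f with
  | FTrue => true
  | FAtom s vs => map snd vs == ar s
  | FNeg g => wf g
  | FAnd g h | FOr g h | FImp g h => wf g && wf h
  | FAll _ g | FEx _ g => wf g
  | FCge1 r ys f1 f2 f3 f4 | FCge2 r ys f1 f2 f3 f4 =>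
      [&& 0 <= r, uniq ys, wf f1, wf f2, wf f3 & wf f4]
  end.
End Syntax.

(* A finite domain is a finite type E with a sort labelling srt; the   *)
(* domain of sort s is {e | srt e = s}.                                *)
(* a structure is the (finite) set of ground atoms that are true.      *)
Section Structures.
Variables (Srt : finType) (sg : signature Srt) (E : finType) (srt : E -> Srt).

Definition wtup (s : sym sg) :=
  {t : (size (ar s)).-tuple E | map srt t == ar s}.

Definition gatom := {s : sym sg & wtup s}.

Definition structure := {set gatom}.

Definition rel_of (A : structure) (s : sym sg) (l : seq E) : bool :=
  [exists a in A, (tag a == s) && (tval (val (tagged a)) == l)].

End Structures.

Section Semantics.
Variables (Srt : finType) (sg : signature Srt) (R : realType)
          (E : finType) (srt : E -> Srt) (A : structure sg srt).

Definition env := var Srt -> option E.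
Definition env0 : env := fun _ => None.
Definition upd (en : env) (x : var Srt) (e : E) : env :=
  fun v => if v == x then Some e else en v.
Definition updl (en : env) (ys : seq (var Srt)) (l : seq E) : env :=
  foldl (fun en' p => upd en' p.1 p.2) en (zip ys l).

Fixpoint sat (en : env) (f : form Srt (sym sg) R) {struct f} : bool :=
  match f with
  | FTrue => true
  | FAtom s vs => all (fun v => en v != None) vs && rel_of A s (pmap en vs)
  | FNeg g => ~~ sat en g
  | FAnd g h => sat en g && sat en h
  | FOr g h => sat en g || sat en h
  | FImp g h => sat en g ==> sat en h
  | FAll x g => [forall e : E, (srt e == x.2) ==> sat (upd en x e) g]
  | FEx x g => [exists e : E, (srt e == x.2) && sat (upd en x e) g]
  | FCge1 r ys f1 f2 f3 f4 =>
      let cnt (p : (size ys).-tuple E -> bool) : nat :=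
        #|[pred t : (size ys).-tuple E | (map srt t == map snd ys) && p t]| in
      let c12 := cnt (fun t => sat (updl en ys t) f1 && sat (updl en ys t) f2) in
      let c2  := cnt (fun t => sat (updl en ys t) f2) in
      let c34 := cnt (fun t => sat (updl en ys t) f3 && sat (updl en ys t) f4) in
      let c4  := cnt (fun t => sat (updl en ys t) f4) in
      [&& (0 < c4)%N, (0 < c2)%N &
          (c34%:R / c4%:R <= r + c12%:R / c2%:R :> R)]
  | FCge2 r ys f1 f2 f3 f4 =>
      let cnt (p : (size ys).-tuple E -> bool) : nat :=
        #|[pred t : (size ys).-tuple E | (map srt t == map snd ys) && p t]| in
      let c12 := cnt (fun t => sat (updl en ys t) f1 && sat (updl en ys t) f2) in
      let c2  := cnt (fun t => sat (updl en ys t) f2) in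
      let c34 := cnt (fun t => sat (updl en ys t) f3 && sat (updl en ys t) f4) in
      let c4  := cnt (fun t => sat (updl en ys t) f4) in
      [&& (0 < c4)%N, (0 < c2)%N &
          (c34%:R / c4%:R + r <= c12%:R / c2%:R :> R)]
  end.
End Semantics.
Arguments env0 {Srt E}.

(* par Q S  means  Q -> S is an edge of G (Q is a parent of S).        *)
(* For each S: variables xs S (the tuple x of chi_{S,i}(x)),           *)
(* formulas chi S i and probabilities mu S i, for i < nu S.            *)
Record lbn (Srt : finType) (R : realType) (sg : signature Srt) := LBN {
  par : rel (sym sg);
  par_acyclic : forall x y, par x y -> ~~ connect par y x;
  nu : sym sg -> nat;
  xs : sym sg -> seq (var Srt);
  chi : forall S : sym sg, 'I_(nu S) -> form Srt (sym sg) R;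
  mu : forall S : sym sg, 'I_(nu S) -> R;
  xs_ok : forall S, uniq (xs S) && (map snd (xs S) == ar S);
  chi_wf : forall (S : sym sg) (i : 'I_(nu S)),
    [/\ wf (@chi S i), all (fun Q => par Q S) (syms (@chi S i))
      & all (mem (xs S)) (fv (@chi S i))];
  chi_cover : forall S (E : finType) (srt : E -> Srt) (A : structure sg srt)
      (t : seq E), map srt t = map snd (xs S) ->
      exists i, sat A (updl env0 (xs S) t) (@chi S i);
  chi_disj : forall S (E : finType) (srt : E -> Srt) (A : structure sg srt)
      (t : seq E) (i j : 'I_(nu S)), i != j -> map srt t = map snd (xs S) ->
      ~~ (sat A (updl env0 (xs S) t) (@chi S i)
          && sat A (updl env0 (xs S) t) (@chi S j));
  root_true : forall S, (forall Q, ~~ par Q S) ->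
      nu S = 1%N /\ (forall i, @chi S i = FTrue);
  mu_range : forall S i, 0 <= @mu S i <= 1 }.

Definition is_root (Srt : finType) (R : realType) (sg : signature Srt)
  (G : lbn R sg) (S : sym sg) : Prop := forall Q, ~~ par G Q S.

(* The probability of the structure A (domain (E, srt)) under the
   Bayesian network induced by G: the product over all ground atoms
   S(a) of mu(S | chi_{S,i}) if S(a) holds in A and 1 - mu(S | chi_{S,i})
   otherwise, where i is the unique index with A |= chi_{S,i}(a). *)
Definition lbn_prob (Srt : finType) (R : realType) (sg : signature Srt)
  (G : lbn R sg) (E : finType) (srt : E -> Srt) (A : structure sg srt) : R :=
  \prod_(a : gatom sg srt)
    \sum_(i < nu G (tag a))
      (if sat A (updl env0 (xs G (tag a)) (tval (val (tagged a))))
              (@chi _ _ _ G (tag a) i)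
       then (if a \in A then @mu _ _ _ G (tag a) i else 1 - @mu _ _ _ G (tag a) i) else 0).

Definition is_reduct (Srt : finType) (sg sg' : signature Srt)
  (iota : sym sg -> sym sg') (E : finType) (srt : E -> Srt)
  (B : structure sg' srt) (A : structure sg srt) : bool :=
  [forall S : sym sg, forall t : (size (ar S)).-tuple E,
     rel_of A S t == rel_of B (iota S) t].

(* Main.v *)
Require Import Defs.
From HB Require Import structures.
From mathcomp Require Import all_boot all_order all_algebra.
From mathcomp Require Import reals.
From mathcomp Require Import zify.
From Stdlib Require Import Lia.
Set Implicit Arguments.
Unset Strict Implicit.
Unset Printing Implicit Defensive.
Import Order.TTheory GRing.Theory Num.Theory.

Section Gen.
Variables (Srt : finType) (R : realType) (E : finType) (srt : E -> Srt).

Lemma updl_cons (en : env Srt E) y ys a l :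
  updl en (y :: ys) (a :: l) = updl (upd en y a) ys l.
Proof. by []. Qed.

Lemma updl_notin (en : env Srt E) ys l v : v \notin ys -> updl en ys l v = en v.
Proof.
elim: ys en l => [|y ys IH] en [|a l] //=; rewrite inE negb_or => /andP[vy vys].
by rewrite updl_cons IH // /upd (negbTE vy).
Qed.

Lemma updl_agree (en en' : env Srt E) ys l :
  (forall v, v \notin ys -> en v = en' v) -> size l = size ys ->
  forall v, updl en ys l v = updl en' ys l v.
Proof.
elim: ys en en' l => [|y ys IH] en en' [|a l] //= H Hs v.
  by apply: H.
case: Hs => Hs.
rewrite !updl_cons; apply: IH => // w wn; rewrite /upd.
case: eqP => // /eqP wy; apply: H; by rewrite inE negb_or wy.
Qed.

Lemma updl_in (en en' : env Srt E) ys l v : v \in ys -> size l = size ys ->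
  updl en ys l v = updl en' ys l v.
Proof.
elim: ys en en' l => [|y ys IH] en en' [|a l] //= vin Hs; case: Hs => Hs.
rewrite !updl_cons; case vys: (v \in ys); first by apply: IH.
rewrite !updl_notin ?vys // /upd; move: vin; rewrite inE vys orbF => ->; done.
Qed.

Lemma updl_agree2 (en en' : env Srt E) ys l v : size l = size ys ->
  (v \notin ys -> en v = en' v) -> updl en ys l v = updl en' ys l v.
Proof.
move=> Hs H; case vys: (v \in ys); first by apply: updl_in.
by rewrite !updl_notin ?vys // H ?vys.
Qed.

Lemma updl_map (en : env Srt E) ys l : uniq ys -> size l = size ys ->
  map (updl en ys l) ys = map Some l.
Proof.
elim: ys en l => [|y ys IH] en [|a l] //= /andP[yn u] Hs; case: Hs => Hs.
by rewrite updl_cons IH // updl_notin // /upd eqxx.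
Qed.

Lemma pmap_someE (f : var Srt -> option E) vs l : map f vs = map Some l -> pmap f vs = l /\ all (fun v => f v != None) vs.
Proof.
elim: vs l => [|v vs IH] [|a l] //= [-> /IH [-> ->]] //.
Qed.

Local Open Scope ring_scope.
Definition cnt n (ss : seq Srt) (p : seq E -> bool) : nat :=
  #|[pred t : n.-tuple E | (map srt t == ss) && p t]|.

Definition cgev (b : bool) (r : R) n ss (p1 p2 p3 p4 : seq E -> bool) : bool :=
  let c12 := cnt n ss (fun t => p1 t && p2 t) in
  let c2 := cnt n ss p2 in
  let c34 := cnt n ss (fun t => p3 t && p4 t) in
  let c4 := cnt n ss p4 in
  [&& (0 < c4)%N, (0 < c2)%N &
     if b then (c34%:R / c4%:R <= r + c12%:R / c2%:R :> R)
     else (c34%:R / c4%:R + r <= c12%:R / c2%:R :> R)].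

Lemma cnt_eq n m ss (p q : seq E -> bool) : n = m ->
  (forall l, size l = n -> p l = q l) -> cnt n ss p = cnt m ss q.
Proof.
move=> e; case: m / e => H; apply: eq_card => t; rewrite !inE H ?size_tuple //.
Qed.

Lemma cgev_eq b r n m ss p1 p2 p3 p4 q1 q2 q3 q4 : n = m ->
  (forall l, size l = n -> [/\ p1 l = q1 l, p2 l = q2 l, p3 l = q3 l & p4 l = q4 l]) ->
  cgev b r n ss p1 p2 p3 p4 = cgev b r m ss q1 q2 q3 q4.
Proof.
move=> e H; rewrite /cgev.
rewrite (@cnt_eq n m ss (fun t => p1 t && p2 t) (fun t => q1 t && q2 t)) //;
  last by move=> l /H [-> -> _ _].
rewrite (@cnt_eq n m ss p2 q2) //; last by move=> l /H [_ -> _ _].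
rewrite (@cnt_eq n m ss (fun t => p3 t && p4 t) (fun t => q3 t && q4 t)) //;
  last by move=> l /H [_ _ -> ->].
by rewrite (@cnt_eq n m ss p4 q4) //; move=> l /H [_ _ _ ->].
Qed.

Lemma satC1 (sg : signature Srt) (A : structure sg srt) en r ys f1 f2 f3 f4 :
  sat A en (FCge1 r ys f1 f2 f3 f4) =
  cgev true r (size ys) (map snd ys) (fun t => sat A (updl en ys t) f1)
    (fun t => sat A (updl en ys t) f2) (fun t => sat A (updl en ys t) f3)
    (fun t => sat A (updl en ys t) f4).
Proof. by []. Qed.

Lemma satC2 (sg : signature Srt) (A : structure sg srt) en r ys f1 f2 f3 f4 :
  sat A en (FCge2 r ys f1 f2 f3 f4) =
  cgev false r (size ys) (map snd ys) (fun t => sat A (updl en ys t) f1)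
    (fun t => sat A (updl en ys t) f2) (fun t => sat A (updl en ys t) f3)
    (fun t => sat A (updl en ys t) f4).
Proof. by []. Qed.

Section Coinc.
Variable (sg : signature Srt) (A : structure sg srt).


Lemma sat_coinc (f : Defs.form Srt (sym sg) R) : forall en en',
  (forall v, v \in fv f -> en v = en' v) -> sat A en f = sat A en' f.
Proof.
elim: f => [|s vs|g IHg|g IHg h IHh|g IHg h IHh|g IHg h IHh|x g IHg|x g IHg
  |r ys f1 IH1 f2 IH2 f3 IH3 f4 IH4|r ys f1 IH1 f2 IH2 f3 IH3 f4 IH4] en en' H; try simpl fv in H.
- by [].
- rewrite /=. have e1 : all (fun v => en v != None) vs = all (fun v => en' v != None) vs.
    by apply: eq_in_all => v /H ->.
  have e2 : pmap en vs = pmap en' vs by apply: eq_in_pmap => v /H.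
  by rewrite e1 e2.
- rewrite /=; by rewrite (IHg _ en').
- rewrite /=; by rewrite (IHg _ en') ?(IHh _ en') // => v vi; apply: H; rewrite mem_cat vi ?orbT.
- rewrite /=; by rewrite (IHg _ en') ?(IHh _ en') // => v vi; apply: H; rewrite mem_cat vi ?orbT.
- rewrite /=; by rewrite (IHg _ en') ?(IHh _ en') // => v vi; apply: H; rewrite mem_cat vi ?orbT.
- rewrite /=; apply: eq_forallb => e; congr (_ ==> _); apply: IHg => v vi; rewrite /upd.
  case: eqP => // /eqP vx; apply: H; by rewrite mem_filter /= vx.
- rewrite /=; apply: eq_existsb => e; congr (_ && _); apply: IHg => v vi; rewrite /upd.
  case: eqP => // /eqP vx; apply: H; by rewrite mem_filter /= vx.
- have HU : forall (t : seq E) (f : Defs.form Srt (sym sg) R), size t = size ys -> (forall v, v \in fv f -> v \in fv f1 ++ fv f2 ++ fv f3 ++ fv f4) ->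
     (forall en en', (forall v, v \in fv f -> en v = en' v) -> sat A en f = sat A en' f) ->
     sat A (updl en ys t) f = sat A (updl en' ys t) f.
    move=> t f Ht Hf IH; apply: IH => v vf; apply: updl_agree2; rewrite ?size_tuple // => wn.
    by apply: H; rewrite mem_filter /= wn Hf.
  have S1 : forall v, v \in fv f1 -> v \in fv f1 ++ fv f2 ++ fv f3 ++ fv f4 by move=> v; rewrite !mem_cat => ->.
  have S2 : forall v, v \in fv f2 -> v \in fv f1 ++ fv f2 ++ fv f3 ++ fv f4 by move=> v; rewrite !mem_cat => ->; rewrite ?orbT.
  have S3 : forall v, v \in fv f3 -> v \in fv f1 ++ fv f2 ++ fv f3 ++ fv f4 by move=> v; rewrite !mem_cat => ->; rewrite ?orbT.
  have S4 : forall v, v \in fv f4 -> v \in fv f1 ++ fv f2 ++ fv f3 ++ fv f4 by move=> v; rewrite !mem_cat => ->; rewrite ?orbT.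
  by rewrite satC1 satC1; apply: cgev_eq => // l Hl; split; apply: HU.
- have HU : forall (t : seq E) (f : Defs.form Srt (sym sg) R), size t = size ys -> (forall v, v \in fv f -> v \in fv f1 ++ fv f2 ++ fv f3 ++ fv f4) ->
     (forall en en', (forall v, v \in fv f -> en v = en' v) -> sat A en f = sat A en' f) ->
     sat A (updl en ys t) f = sat A (updl en' ys t) f.
    move=> t f Ht Hf IH; apply: IH => v vf; apply: updl_agree2; rewrite ?size_tuple // => wn.
    by apply: H; rewrite mem_filter /= wn Hf.
  have S1 : forall v, v \in fv f1 -> v \in fv f1 ++ fv f2 ++ fv f3 ++ fv f4 by move=> v; rewrite !mem_cat => ->.
  have S2 : forall v, v \in fv f2 -> v \in fv f1 ++ fv f2 ++ fv f3 ++ fv f4 by move=> v; rewrite !mem_cat => ->; rewrite ?orbT.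
  have S3 : forall v, v \in fv f3 -> v \in fv f1 ++ fv f2 ++ fv f3 ++ fv f4 by move=> v; rewrite !mem_cat => ->; rewrite ?orbT.
  have S4 : forall v, v \in fv f4 -> v \in fv f1 ++ fv f2 ++ fv f3 ++ fv f4 by move=> v; rewrite !mem_cat => ->; rewrite ?orbT.
  by rewrite satC2 satC2; apply: cgev_eq => // l Hl; split; apply: HU.
Qed.
End Coinc.

Lemma sat_syms (sg : signature Srt) (A A' : structure sg srt) (f : Defs.form Srt (sym sg) R) :
  (forall s, s \in syms f -> rel_of A s =1 rel_of A' s) -> forall en, sat A en f = sat A' en f.
Proof.
elim: f => [|s vs|g IHg|g IHg h IHh|g IHg h IHh|g IHg h IHh|x g IHg|x g IHg
  |r ys f1 IH1 f2 IH2 f3 IH3 f4 IH4|r ys f1 IH1 f2 IH2 f3 IH3 f4 IH4] H en; try simpl syms in H.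
- by [].
- by rewrite /= H // inE.
- by rewrite /= IHg.
- by rewrite /= IHg ?IHh // => s si; apply: H; rewrite mem_cat si ?orbT.
- by rewrite /= IHg ?IHh // => s si; apply: H; rewrite mem_cat si ?orbT.
- by rewrite /= IHg ?IHh // => s si; apply: H; rewrite mem_cat si ?orbT.
- by rewrite /=; apply: eq_forallb => e; rewrite IHg.
- by rewrite /=; apply: eq_existsb => e; rewrite IHg.
- rewrite !satC1; apply: cgev_eq => // l _.
  by split; [rewrite IH1 | rewrite IH2 | rewrite IH3 | rewrite IH4] => // s si; apply: H; rewrite !mem_cat si ?orbT.
- rewrite !satC2; apply: cgev_eq => // l _.
  by split; [rewrite IH1 | rewrite IH2 | rewrite IH3 | rewrite IH4] => // s si; apply: H; rewrite !mem_cat si ?orbT.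
Qed.

Definition sh (c : nat) (x : var Srt) : var Srt := ((c + x.1)%N, x.2).
Lemma sh_inj c : injective (sh c).
Proof. by case=> n s [m t] [/addnI -> ->]. Qed.
Definition mxn (ys : seq (var Srt)) : nat := \max_(y <- ys) y.1.
Lemma mxn_ge ys y : y \in ys -> (y.1 <= mxn ys)%N.
Proof. by move=> yi; rewrite /mxn; apply: leq_bigmax_seq. Qed.

Definition upd1 (σ : var Srt -> var Srt) c x := fun y => if y == x then sh c x else σ y.
Definition updv (σ : var Srt -> var Srt) c (ys : seq (var Srt)) := fun y => if y \in ys then sh c y else σ y.

Fixpoint tr (S1 S2 : Type) (atf : nat -> S1 -> seq (var Srt) -> Defs.form Srt S2 R)
  (σ : var Srt -> var Srt) (c : nat) (f : Defs.form Srt S1 R) {struct f} : Defs.form Srt S2 R :=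
  match f with
  | FTrue => FTrue
  | FAtom s vs => atf c s (map σ vs)
  | FNeg g => FNeg (tr atf σ c g)
  | FAnd g h => FAnd (tr atf σ c g) (tr atf σ c h)
  | FOr g h => FOr (tr atf σ c g) (tr atf σ c h)
  | FImp g h => FImp (tr atf σ c g) (tr atf σ c h)
  | FAll x g => FAll (sh c x) (tr atf (upd1 σ c x) (c + x.1).+1 g)
  | FEx x g => FEx (sh c x) (tr atf (upd1 σ c x) (c + x.1).+1 g)
  | FCge1 r ys f1 f2 f3 f4 =>
      FCge1 r (map (sh c) ys) (tr atf (updv σ c ys) (c + (mxn ys).+1) f1)
        (tr atf (updv σ c ys) (c + (mxn ys).+1) f2) (tr atf (updv σ c ys) (c + (mxn ys).+1) f3)
        (tr atf (updv σ c ys) (c + (mxn ys).+1) f4)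
  | FCge2 r ys f1 f2 f3 f4 =>
      FCge2 r (map (sh c) ys) (tr atf (updv σ c ys) (c + (mxn ys).+1) f1)
        (tr atf (updv σ c ys) (c + (mxn ys).+1) f2) (tr atf (updv σ c ys) (c + (mxn ys).+1) f3)
        (tr atf (updv σ c ys) (c + (mxn ys).+1) f4)
  end.

Lemma pmap_mapE (T U : Type) (f : T -> option U) (g : var Srt -> T) s : pmap f (map g s) = pmap (f \o g) s.
Proof. by elim: s => //= a s ->. Qed.

Lemma updl_ren (en en' : env Srt E) (g : var Srt -> var Srt) (ginj : injective g) σ' ys l :
  size l = size ys -> (forall y, y \in ys -> σ' y = g y) ->
  (forall y, y \notin ys -> σ' y \notin map g ys /\ en (σ' y) = en' y) ->
  forall y, updl en (map g ys) l (σ' y) = updl en' ys l y.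
Proof.
elim: ys en en' l => [|y0 ys IH] en en' [|a l] //= Hs Hin Hout y.
  by case: (Hout y).
case: Hs => Hs; rewrite !updl_cons; apply: IH => // [z zi|z zn].
  by apply: Hin; rewrite inE zi orbT.
case: (z =P y0) => [ez|/eqP zy0].
  subst z; rewrite Hin ?inE ?eqxx // mem_map // zn; split => //.
  by rewrite /upd !eqxx.
have zn' : z \notin y0 :: ys by rewrite inE negb_or zy0.
case: (Hout z zn') => /= ; rewrite inE negb_or => /andP[ne nin] ee; split => //.
by rewrite /upd (negbTE ne) (negbTE zy0).
Qed.

Section Tr.
Variables (sg1 sg2 : signature Srt) (A1 : structure sg1 srt) (A2 : structure sg2 srt)
  (atf : nat -> sym sg1 -> seq (var Srt) -> Defs.form Srt (sym sg2) R).
Hypothesis at_spec : forall c en s ws, (0 < c)%N -> (forall w, w \in ws -> (w.1 < c)%N) ->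
  map snd ws = ar s ->
  sat A2 en (atf c s ws) = all (fun v => en v != None) ws && rel_of A1 s (pmap en ws).

Lemma sat_tr (f : Defs.form Srt (sym sg1) R) : forall σ c en en', wf f -> (0 < c)%N ->
  (forall y, ((σ y).1 < c)%N) -> (forall y, (σ y).2 = y.2) -> (forall y, en (σ y) = en' y) ->
  sat A2 en (tr atf σ c f) = sat A1 en' f.
Proof.
elim: f => [|s vs|g IHg|g IHg h IHh|g IHg h IHh|g IHg h IHh|x g IHg|x g IHg
  |r ys f1 IH1 f2 IH2 f3 IH3 f4 IH4|r ys f1 IH1 f2 IH2 f3 IH3 f4 IH4] σ c en en' Hwf c0 Hr Hs He.
- by [].
- rewrite /= at_spec //; last by rewrite -(eqP Hwf) -map_comp; apply: eq_map => y /=; rewrite Hs.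
    rewrite all_map pmap_mapE.
    rewrite (@eq_all _ _ (fun v => en' v != None)); last by move=> v /=; rewrite He.
    by rewrite (@eq_pmap _ _ _ en'); last by move=> v /=; rewrite He.
  by move=> w /mapP [y _ ->]; apply: Hr.
- by rewrite /= (IHg _ _ _ en').
- by case/andP: Hwf => w1 w2; rewrite /= (IHg _ _ _ en') ?(IHh _ _ _ en').
- by case/andP: Hwf => w1 w2; rewrite /= (IHg _ _ _ en') ?(IHh _ _ _ en').
- by case/andP: Hwf => w1 w2; rewrite /= (IHg _ _ _ en') ?(IHh _ _ _ en').
- rewrite /=; apply: eq_forallb => e; congr (_ ==> _); apply: IHg => //.
  + move=> y; rewrite /upd1; case: eqP => _ /=; [lia | have := Hr y; lia].
  + by move=> y; rewrite /upd1; case: eqP => [->|_].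
  + move=> y; rewrite /upd1 /upd; have [exy|ne] := eqVneq y x; first by subst y; rewrite !eqxx.
    case: eqP => // ee; have := Hr y; rewrite ee /=; lia.
- rewrite /=; apply: eq_existsb => e; congr (_ && _); apply: IHg => //.
  + move=> y; rewrite /upd1; case: eqP => _ /=; [lia | have := Hr y; lia].
  + by move=> y; rewrite /upd1; case: eqP => [->|_].
  + move=> y; rewrite /upd1 /upd; have [exy|ne] := eqVneq y x; first by subst y; rewrite !eqxx.
    case: eqP => // ee; have := Hr y; rewrite ee /=; lia.
- case/andP: Hwf => _ /andP [_ /andP [w1 /andP [w2 /andP [w3 w4]]]].
  rewrite [tr _ _ _ _]/= !satC1.
  have -> : map snd (map (sh c) ys) = map snd ys by rewrite -map_comp.
  have Hr' : forall y, ((updv σ c ys y).1 < c + (mxn ys).+1)%N.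
    move=> y; rewrite /updv; case: ifP => [/mxn_ge|_] /=; first lia. have := Hr y; lia.
  have Hs' : forall y, (updv σ c ys y).2 = y.2 by move=> y; rewrite /updv; case: ifP.
  have He' : forall l, size l = size (map (sh c) ys) -> forall y, updl en (map (sh c) ys) l (updv σ c ys y) = updl en' ys l y.
    move=> l; rewrite size_map => Hl; apply: updl_ren => //; first exact: sh_inj.
      by move=> y yi; rewrite /updv yi.
    move=> y yn; rewrite /updv (negbTE yn); split; last exact: He.
    apply/negP => /mapP [z _ ez]; have := Hr y; rewrite ez /=; lia.
  apply: cgev_eq; first by rewrite size_map.
  move=> l Hl; split; [apply: IH1 | apply: IH2 | apply: IH3 | apply: IH4] => //; try lia; exact: He'.
- case/andP: Hwf => _ /andP [_ /andP [w1 /andP [w2 /andP [w3 w4]]]].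
  rewrite [tr _ _ _ _]/= !satC2.
  have -> : map snd (map (sh c) ys) = map snd ys by rewrite -map_comp.
  have Hr' : forall y, ((updv σ c ys y).1 < c + (mxn ys).+1)%N.
    move=> y; rewrite /updv; case: ifP => [/mxn_ge|_] /=; first lia. have := Hr y; lia.
  have Hs' : forall y, (updv σ c ys y).2 = y.2 by move=> y; rewrite /updv; case: ifP.
  have He' : forall l, size l = size (map (sh c) ys) -> forall y, updl en (map (sh c) ys) l (updv σ c ys y) = updl en' ys l y.
    move=> l; rewrite size_map => Hl; apply: updl_ren => //; first exact: sh_inj.
      by move=> y yi; rewrite /updv yi.
    move=> y yn; rewrite /updv (negbTE yn); split; last exact: He.
    apply/negP => /mapP [z _ ez]; have := Hr y; rewrite ez /=; lia.
  apply: cgev_eq; first by rewrite size_map.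
  move=> l Hl; split; [apply: IH1 | apply: IH2 | apply: IH3 | apply: IH4] => //; try lia; exact: He'.
Qed.
End Tr.

Section Tr2.
Variables (sg1 sg2 : signature Srt)
  (atf : nat -> sym sg1 -> seq (var Srt) -> Defs.form Srt (sym sg2) R).

Lemma wf_tr : (forall c s ws, map snd ws = ar s -> wf (atf c s ws)) ->
  forall (f : Defs.form Srt (sym sg1) R) σ c, wf f -> (forall y, (σ y).2 = y.2) -> wf (tr atf σ c f).
Proof.
move=> Ha; elim => [|s vs|g IHg|g IHg h IHh|g IHg h IHh|g IHg h IHh|x g IHg|x g IHg
  |r ys f1 IH1 f2 IH2 f3 IH3 f4 IH4|r ys f1 IH1 f2 IH2 f3 IH3 f4 IH4] σ c Hwf Hs //=.
- by apply: Ha; rewrite -(eqP Hwf) -map_comp; apply: eq_map => y /=; rewrite Hs.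
- by apply: IHg.
- by case/andP: Hwf => ? ?; rewrite IHg ?IHh.
- by case/andP: Hwf => ? ?; rewrite IHg ?IHh.
- by case/andP: Hwf => ? ?; rewrite IHg ?IHh.
- by apply: IHg => // y; rewrite /upd1; case: ifP => // /eqP ->.
- by apply: IHg => // y; rewrite /upd1; case: ifP => // /eqP ->.
- case/andP: Hwf => -> /andP [u /andP [w1 /andP [w2 /andP [w3 w4]]]].
  have Hs' : forall y, (updv σ c ys y).2 = y.2 by move=> y; rewrite /updv; case: ifP.
  by rewrite (map_inj_uniq (@sh_inj c)) u !IH1 ?IH2 ?IH3 ?IH4.
- case/andP: Hwf => -> /andP [u /andP [w1 /andP [w2 /andP [w3 w4]]]].
  have Hs' : forall y, (updv σ c ys y).2 = y.2 by move=> y; rewrite /updv; case: ifP.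
  by rewrite (map_inj_uniq (@sh_inj c)) u !IH1 ?IH2 ?IH3 ?IH4.
Qed.

Lemma syms_tr (p : pred (sym sg2)) (f : Defs.form Srt (sym sg1) R) :
  (forall c s ws, s \in syms f -> all p (syms (atf c s ws))) -> forall σ c, all p (syms (tr atf σ c f)).
Proof.
elim: f => [|s vs|g IHg|g IHg h IHh|g IHg h IHh|g IHg h IHh|x g IHg|x g IHg
  |r ys f1 IH1 f2 IH2 f3 IH3 f4 IH4|r ys f1 IH1 f2 IH2 f3 IH3 f4 IH4] Ha σ c //=;
  rewrite ?all_cat; try simpl syms in Ha.
- by apply: Ha; rewrite inE.
- by apply: IHg.
- by rewrite IHg ?IHh // => c' s ws si; apply: Ha; rewrite mem_cat si ?orbT.
- by rewrite IHg ?IHh // => c' s ws si; apply: Ha; rewrite mem_cat si ?orbT.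
- by rewrite IHg ?IHh // => c' s ws si; apply: Ha; rewrite mem_cat si ?orbT.
- by apply: IHg.
- by apply: IHg.
- by rewrite IH1 ?IH2 ?IH3 ?IH4 // => c' s ws si; apply: Ha; rewrite !mem_cat si ?orbT.
- by rewrite IH1 ?IH2 ?IH3 ?IH4 // => c' s ws si; apply: Ha; rewrite !mem_cat si ?orbT.
Qed.

Lemma fv_tr : (forall c s ws, map snd ws = ar s -> all (mem ws) (fv (atf c s ws))) ->
  forall (f : Defs.form Srt (sym sg1) R) σ c, wf f -> (forall y, (σ y).2 = y.2) ->
  all (mem (map σ (fv f))) (fv (tr atf σ c f)).
Proof.
move=> Ha; elim => [|s vs|g IHg|g IHg h IHh|g IHg h IHh|g IHg h IHh|x g IHg|x g IHg
  |r ys f1 IH1 f2 IH2 f3 IH3 f4 IH4|r ys f1 IH1 f2 IH2 f3 IH3 f4 IH4] σ c Hwf Hs //=.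
- by apply: Ha; rewrite -(eqP Hwf) -map_comp; apply: eq_map => y /=; rewrite Hs.
- by apply: IHg.
- case/andP: Hwf => w1 w2; rewrite all_cat; apply/andP; split.
    by apply: sub_all (IHg σ c w1 Hs) => v /=; rewrite map_cat mem_cat => ->.
  by apply: sub_all (IHh σ c w2 Hs) => v /=; rewrite map_cat mem_cat => ->; rewrite orbT.
- case/andP: Hwf => w1 w2; rewrite all_cat; apply/andP; split.
    by apply: sub_all (IHg σ c w1 Hs) => v /=; rewrite map_cat mem_cat => ->.
  by apply: sub_all (IHh σ c w2 Hs) => v /=; rewrite map_cat mem_cat => ->; rewrite orbT.
- case/andP: Hwf => w1 w2; rewrite all_cat; apply/andP; split.
    by apply: sub_all (IHg σ c w1 Hs) => v /=; rewrite map_cat mem_cat => ->.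
  by apply: sub_all (IHh σ c w2 Hs) => v /=; rewrite map_cat mem_cat => ->; rewrite orbT.
- have Hs' : forall y, (upd1 σ c x y).2 = y.2 by move=> y; rewrite /upd1; case: ifP => // /eqP ->.
  rewrite all_filter; apply: sub_all (IHg _ (c + x.1).+1 Hwf Hs') => v /= /mapP [y yi ->].
  apply/implyP; rewrite /upd1; case: ifP => [_|/negbT ne _]; first by rewrite eqxx.
  by apply: map_f; rewrite mem_filter /= ne.
- have Hs' : forall y, (upd1 σ c x y).2 = y.2 by move=> y; rewrite /upd1; case: ifP => // /eqP ->.
  rewrite all_filter; apply: sub_all (IHg _ (c + x.1).+1 Hwf Hs') => v /= /mapP [y yi ->].
  apply/implyP; rewrite /upd1; case: ifP => [_|/negbT ne _]; first by rewrite eqxx.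
  by apply: map_f; rewrite mem_filter /= ne.
- case/andP: Hwf => _ /andP [u /andP [w1 /andP [w2 /andP [w3 w4]]]].
  have Hs' : forall y, (updv σ c ys y).2 = y.2 by move=> y; rewrite /updv; case: ifP.
  rewrite all_filter !all_cat.
  have K : forall g, wf g -> (forall v, v \in fv g -> v \in fv f1 ++ fv f2 ++ fv f3 ++ fv f4) ->
      all (mem (map (updv σ c ys) (fv g))) (fv (tr atf (updv σ c ys) (c + (mxn ys).+1) g)) ->
      all (fun x => (x \in [predC map (sh c) ys]) ==> (x \in (map σ [seq x <- fv f1 ++ fv f2 ++ fv f3 ++ fv f4 | x \in [predC ys]])))
        (fv (tr atf (updv σ c ys) (c + (mxn ys).+1) g)).
    move=> g wg Hg Hall; apply: sub_all Hall => v /= /mapP [y yi ->].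
    apply/implyP; rewrite /updv; case: ifP => /= [yy|/negbT yn _].
      by rewrite !inE /= (map_f _ yy).
    by apply: map_f; rewrite mem_filter inE /= yn Hg.
  rewrite !K ?IH1 ?IH2 ?IH3 ?IH4 // => v vi; rewrite !mem_cat vi ?orbT //.
- case/andP: Hwf => _ /andP [u /andP [w1 /andP [w2 /andP [w3 w4]]]].
  have Hs' : forall y, (updv σ c ys y).2 = y.2 by move=> y; rewrite /updv; case: ifP.
  rewrite all_filter !all_cat.
  have K : forall g, wf g -> (forall v, v \in fv g -> v \in fv f1 ++ fv f2 ++ fv f3 ++ fv f4) ->
      all (mem (map (updv σ c ys) (fv g))) (fv (tr atf (updv σ c ys) (c + (mxn ys).+1) g)) ->
      all (fun x => (x \in [predC map (sh c) ys]) ==> (x \in (map σ [seq x <- fv f1 ++ fv f2 ++ fv f3 ++ fv f4 | x \in [predC ys]])))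
        (fv (tr atf (updv σ c ys) (c + (mxn ys).+1) g)).
    move=> g wg Hg Hall; apply: sub_all Hall => v /= /mapP [y yi ->].
    apply/implyP; rewrite /updv; case: ifP => /= [yy|/negbT yn _].
      by rewrite !inE /= (map_f _ yy).
    by apply: map_f; rewrite mem_filter inE /= yn Hg.
  rewrite !K ?IH1 ?IH2 ?IH3 ?IH4 // => v vi; rewrite !mem_cat vi ?orbT //.
Qed.
End Tr2.
End Gen.

Section Constr.
Variables (Srt : finType) (R : realType) (sg : signature Srt) (G : lbn R sg).

Definition NN : nat := (\max_(S : sym sg) nu G S).+1.
Lemma nuN (S : sym sg) : (nu G S <= NN)%N.
Proof. by apply: leqW; apply: (leq_bigmax (F := nu G)). Qed.

Definition sym' : finType := (sym sg * option 'I_NN)%type.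
Definition sg' : signature Srt := @Signature Srt sym' (fun p => ar p.1).

Definition N0 : nat := (\max_(S : sym sg) \max_(v <- xs G S) v.1).+1.
Lemma N0_gt S v : v \in xs G S -> (v.1 < N0)%N.
Proof.
move=> vi; rewrite ltnS; apply: leq_trans (leq_bigmax (F := fun S => \max_(v <- xs G S) v.1) S).
exact: leq_bigmax_seq.
Qed.

Definition sig0 (y : var Srt) : var Srt := if (y.1 < N0)%N then y else (0%N, y.2).
Definition sigw (Q : sym sg) (ws : seq (var Srt)) (y : var Srt) : var Srt :=
  let z := nth (0%N, y.2) ws (index y (xs G Q)) in if z.2 == y.2 then z else (0%N, y.2).
Definition atid (c : nat) (s : sym sg') (ws : seq (var Srt)) : Defs.form Srt (sym sg') R := FAtom R s ws.
Definition root (S : sym sg) (i : 'I_(nu G S)) : sym sg' := (S, Some (widen_ord (nuN S) i)).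
Definition FF : Defs.form Srt (sym sg') R := FNeg FTrue.

Fixpoint Def (k : nat) : sym sg -> Defs.form Srt (sym sg') R :=
  match k with
  | 0 => fun _ => FF
  | k'.+1 => fun S => \big[@FOr _ _ _/FF]_(i < nu G S)
       FAnd (tr (fun c Q ws => tr atid (sigw Q ws) c (Def k' Q)) sig0 N0 (@chi _ _ _ G S i))
            (FAtom R (@root S i) (xs G S))
  end.

Lemma sig0_sort y : (sig0 y).2 = y.2. Proof. by rewrite /sig0; case: ifP. Qed.
Lemma sigw_sort Q ws y : (sigw Q ws y).2 = y.2. Proof. by rewrite /sigw; case: eqP. Qed.

Lemma xsG_ok S : uniq (xs G S) /\ map snd (xs G S) = ar S.
Proof. by case/andP: (xs_ok G S) => u /eqP. Qed.

Lemma nth_index_map_gen (d : var Srt -> var Srt) (xs0 ws : seq (var Srt)) :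
  map snd ws = map snd xs0 -> uniq xs0 ->
  map (fun y => let z := nth (d y) ws (index y xs0) in if z.2 == y.2 then z else d y) xs0 = ws.
Proof.
elim: xs0 ws => [|x xs0 IH] [|w ws] //= [Hw Hs] /andP [xn u].
rewrite eqxx /= Hw eqxx; congr (_ :: _).
rewrite -[RHS](IH ws Hs u); apply/eq_in_map => y yi /=.
by have -> : (x == y) = false by apply/eqP => exy; subst y; rewrite yi in xn.
Qed.

Lemma sigw_map Q ws : map snd ws = ar Q -> map (sigw Q ws) (xs G Q) = ws.
Proof.
move=> Hs; have [u Hx] := xsG_ok Q.
by apply: nth_index_map_gen => //; rewrite Hs Hx.
Qed.

Lemma sigw_lt Q ws c y : (0 < c)%N -> (forall w, w \in ws -> (w.1 < c)%N) -> ((sigw Q ws y).1 < c)%N.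
Proof.
move=> c0 H; rewrite /sigw; case: eqP => //= _.
case: (ltnP (index y (xs G Q)) (size ws)) => [lt|ge]; first by apply: H; exact: mem_nth.
by rewrite nth_default.
Qed.

Lemma sigw_in Q ws y : y \in xs G Q -> map snd ws = ar Q -> sigw Q ws y \in ws.
Proof.
move=> yi Hs; rewrite -{2}(sigw_map Hs); exact: map_f.
Qed.

Lemma sig0_lt y : ((sig0 y).1 < N0)%N.
Proof. by rewrite /sig0; case: ifP. Qed.

Lemma sig0_id S y : y \in xs G S -> sig0 y = y.
Proof. by move=> /N0_gt; rewrite /sig0 => ->. Qed.

Lemma wf_bigor m (F : 'I_m -> Defs.form Srt (sym sg') R) :
  (forall i, wf (F i)) -> wf (\big[@FOr _ _ _/FF]_(i < m) F i).
Proof. by move=> H; apply: (big_ind (fun f : Defs.form Srt (sym sg') R => is_true (wf f))) => //= x y -> ->. Qed.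

Lemma syms_bigor (p : pred sym') m (F : 'I_m -> Defs.form Srt (sym sg') R) :
  (forall i, all p (syms (F i))) -> all p (syms (\big[@FOr _ _ _/FF]_(i < m) F i)).
Proof. by move=> H; apply: (big_ind (fun f : Defs.form Srt (sym sg') R => is_true (all p (syms f)))) => //= x y; rewrite all_cat => -> ->. Qed.

Lemma fv_bigor (p : pred (var Srt)) m (F : 'I_m -> Defs.form Srt (sym sg') R) :
  (forall i, all p (fv (F i))) -> all p (fv (\big[@FOr _ _ _/FF]_(i < m) F i)).
Proof. by move=> H; apply: (big_ind (fun f : Defs.form Srt (sym sg') R => is_true (all p (fv f)))) => //= x y; rewrite all_cat => -> ->. Qed.

Lemma Def_syn k : forall S, [/\ wf (Def k S), all (fun Q : sym' => Q.2 != None) (syms (Def k S))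
   & all (mem (xs G S)) (fv (Def k S))].
Proof.
elim: k => [|k IH] S //=.
have wc : forall S i, wf (@chi _ _ _ G S i) by move=> S0 i; case: (@chi_wf _ _ _ G S0 i).
have fc : forall S i, all (mem (xs G S)) (fv (@chi _ _ _ G S i)) by move=> S0 i; case: (@chi_wf _ _ _ G S0 i).
split.
- apply: wf_bigor => i /=; apply/andP; split; last by have [_ ->] := xsG_ok S.
  apply: (@wf_tr _ _ sg sg'); last exact: sig0_sort.
  + move=> c Q ws Hs; apply: (@wf_tr _ _ sg' sg'); last exact: sigw_sort.
    * by move=> c' s' ws' /= ->.
    * by case: (IH Q).
  + exact: (wc S i).
- apply: syms_bigor => i /=; rewrite all_cat /= andbT; apply: (@syms_tr _ _ sg sg') => c Q ws _.
  apply: (@syms_tr _ _ sg' sg') => c' s' ws' si /=; rewrite andbT.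
  by case: (IH Q) => _ /allP H _; apply: H.
- apply: fv_bigor => i /=; rewrite all_cat; apply/andP; split; last by apply/allP.
  have Hsp : forall c Q ws, map snd ws = ar Q ->
      all (mem ws) (fv (tr atid (sigw Q ws) c (Def k Q))).
    move=> c Q ws Hs.
    have Hsp2 : forall (c' : nat) (s' : sym sg') (ws' : seq (var Srt)), map snd ws' = ar s' -> all (mem ws') (fv (atid c' s' ws')).
      by move=> c' s' ws' _; apply/allP.
    have wQ : wf (Def k Q) by case: (IH Q).
    have H := (@fv_tr _ _ sg' sg') atid Hsp2 _ (sigw Q ws) c wQ (@sigw_sort Q ws).
    apply: sub_all H => v /= /mapP [y yi ->].
    by apply: sigw_in => //; case: (IH Q) => _ _ /allP; apply.
  have H := (@fv_tr _ _ sg sg') (fun c Q ws => tr atid (sigw Q ws) c (Def k Q)) Hsp _ sig0 N0 (wc S i) sig0_sort.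
  apply: sub_all H => v /= /mapP [y yi ->].
  by have /allP := fc S i => /(_ y yi) yx; rewrite (sig0_id yx).
Qed.

Local Open Scope ring_scope.
Definition par' : rel sym' := fun Q S => (Q.2 != None) && (S.2 == None).
Definition nu' (S : sym') : nat := if S.2 is None then 2 else 1.
Definition xs' (S : sym') : seq (var Srt) := xs G S.1.
Definition chi' (S : sym') (i : 'I_(nu' S)) : Defs.form Srt (sym sg') R :=
  if S.2 is None then (if val i == 0%N then Def #|sym sg| S.1 else FNeg (Def #|sym sg| S.1)) else FTrue.
Definition mu'' (S : sym sg) (j : 'I_NN) : R := oapp (@mu _ _ _ G S) 0 (insub (val j)).
Definition mu' (S : sym') (i : 'I_(nu' S)) : R :=
  match S.2 with Some j => mu'' S.1 j | None => if val i == 0%N then 1 else 0 end.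

Lemma par'_acyclic x y : par' x y -> ~~ connect par' y x.
Proof.
case/andP => xn /eqP yn; apply/negP => /connectP [[|z p] /= pa ex].
  by subst x; rewrite yn in xn.
by case/andP: pa => /andP [] /=; rewrite yn.
Qed.

Lemma xs'_ok S : uniq (xs' S) && (map snd (xs' S) == ar (s := sg') S).
Proof. exact: (xs_ok G S.1). Qed.

Lemma chi'_wf (S : sym') (i : 'I_(nu' S)) :
  [/\ wf (chi' i), all (fun Q => par' Q S) (syms (chi' i)) & all (mem (xs' S)) (fv (chi' i))].
Proof.
case: S i => S [j|] i //=; rewrite /chi' /=.
case: (Def_syn #|sym sg| S) => w sy fvv.
have sy' : all (fun Q => par' Q (S, None)) (syms (Def #|sym sg| S)).
  by apply: sub_all sy => Q H; rewrite /par' H.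
by case: ifP.
Qed.

Lemma mu'_range S i : 0 <= @mu' S i <= 1.
Proof.
rewrite /mu'; case: S.2 => [j|]; last by case: ifP => _; rewrite ?lexx ?ler01.
rewrite /mu''; case: insub => [k|] /=; last by rewrite lexx ler01.
exact: mu_range.
Qed.

Lemma chi'_cover (S : sym') (E : finType) (srt : E -> Srt) (A : structure sg' srt) (t : seq E) :
  map srt t = map snd (xs' S) -> exists i, sat A (updl env0 (xs' S) t) (@chi' S i).
Proof.
case: S => S [j|] _ /=; first by exists ord0.
case b: (sat A (updl env0 (xs' (S, None)) t) (Def #|sym sg| S)).
  by exists ord0; rewrite /chi' /= b.
by exists (@Ordinal 2 1 isT); rewrite /chi' /= b.
Qed.

Lemma chi'_disj (S : sym') (E : finType) (srt : E -> Srt) (A : structure sg' srt) (t : seq E) (i j : 'I_(nu' S)) :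
  i != j -> map srt t = map snd (xs' S) ->
  ~~ (sat A (updl env0 (xs' S) t) (chi' i) && sat A (updl env0 (xs' S) t) (chi' j)).
Proof.
case: S i j => S [k|] /=.
  by case=> [[|?] ?] [[|?] ?].
case=> [[|[|?]] ?] [[|[|?]] ?] //= _ _; rewrite /chi' /=.
  by case: sat.
by case: sat.
Qed.

Lemma root'_true (S : sym') : (forall Q, ~~ par' Q S) -> nu' S = 1%N /\ (forall i, @chi' S i = FTrue).
Proof.
case: S => S [j|] H //.
by have := H (S, Some ord0).
Qed.

Definition G' : lbn R sg' := @LBN Srt R sg' par' par'_acyclic nu' xs' chi' mu' xs'_ok chi'_wf
  chi'_cover chi'_disj root'_true mu'_range.

Section Sem.
Variables (E : finType) (srt : E -> Srt).

Lemma rel_ofE (sg0 : signature Srt) (A : structure sg0 srt) (a : gatom sg0 srt) :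
  rel_of A (tag a) (tval (val (tagged a))) = (a \in A).
Proof.
apply/existsP/idP => [[b /andP [bA /andP [/eqP tb /eqP vb]]]|aA]; last by exists a; rewrite aA !eqxx.
case: a b tb vb bA => s w [s' w'] /= tb; subst s' => vb.
by have -> : w' = w by apply: val_inj; apply: val_inj.
Qed.

Lemma rel_of_sorted (sg0 : signature Srt) (A : structure sg0 srt) s l :
  rel_of A s l -> map srt l == ar s.
Proof.
case/existsP => [[s' w] /andP [_ /andP [/eqP /= ts /eqP <-]]]; subst s'.
exact: (valP w).
Qed.

Lemma sat_bigor (B : structure sg' srt) en m (F : 'I_m -> Defs.form Srt (sym sg') R) :
  sat B en (\big[@FOr _ _ _/FF]_(i < m) F i) = [exists i, sat B en (F i)].
Proof.
rewrite (big_morph (sat B en) (id1 := false) (op1 := orb)) //.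
by rewrite big_orE.
Qed.

Definition Dset k (B : structure sg' srt) : structure sg srt :=
  [set a : gatom sg srt | sat B (updl env0 (xs G (tag a)) (tval (val (tagged a)))) (Def k (tag a))].

Lemma Def_sorted k (B : structure sg' srt) en S : sat B en (Def k S) ->
  all (fun v => en v != None) (xs G S) && (map srt (pmap en (xs G S)) == ar S).
Proof.
case: k => [|k] //=; rewrite sat_bigor => /existsP [i /andP [_ /andP [-> /rel_of_sorted]]] //.
Qed.

Lemma updl_env0 S (l : seq E) : size l = size (ar S) ->
  map (updl env0 (xs G S) l) (xs G S) = map Some l.
Proof.
have [u Hx] := xsG_ok S => Hl; apply: updl_map => //.
by rewrite Hl -Hx size_map.
Qed.

Lemma rel_of_Dset k (B : structure sg' srt) S l : size l = size (ar S) ->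
  rel_of (Dset k B) S l = sat B (updl env0 (xs G S) l) (Def k S).
Proof.
move=> Hl; apply/existsP/idP => [[[S' w] /andP [wD /andP [/eqP /= ts /eqP wl]]]|H].
  by subst S'; move: wD; rewrite inE /= wl.
have := Def_sorted H; case: (pmap_someE (updl_env0 Hl)) => -> _ /andP [_ Hsrt].
have Hsz : size l == size (ar S) by apply/eqP.
pose w : @wtup _ sg _ srt S := exist _ (Tuple Hsz) Hsrt.
exists (existT _ S w); rewrite inE /= H !eqxx //.
Qed.

Lemma map_some_pmap (en : env Srt E) ws : all (fun v => en v != None) ws ->
  map en ws = map Some (pmap en ws).
Proof. by elim: ws => //= w ws IH /andP [H /IH ->]; case: (en w) H. Qed.

Lemma eq_in_map_in (f g : var Srt -> option E) s v : map f s = map g s -> v \in s -> f v = g v.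
Proof. by elim: s => //= a s IH [e1 e2]; rewrite inE => /orP [/eqP ->|/IH]; auto. Qed.

Lemma at_spec_k k (B : structure sg' srt) c en s ws : (0 < c)%N -> (forall w, w \in ws -> (w.1 < c)%N) ->
  map snd ws = ar s ->
  sat B en (tr atid (sigw s ws) c (Def k s)) = all (fun v => en v != None) ws && rel_of (Dset k B) s (pmap en ws).
Proof.
move=> c0 Hw Hs.
have wD : wf (Def k s) by case: (Def_syn k s).
have fD : all (mem (xs G s)) (fv (Def k s)) by case: (Def_syn k s).
have -> : sat B en (tr atid (sigw s ws) c (Def k s)) = sat B (fun y => en (sigw s ws y)) (Def k s).
  apply: (@sat_tr _ _ _ _ sg' sg' B B atid) => //.
  - by move=> y; apply: sigw_lt.
  - exact: sigw_sort.
have Hm := sigw_map Hs.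
case Ha : (all (fun v => en v != None) ws) => /=; last first.
  apply/negP => /Def_sorted /andP [H _]; move: Ha; rewrite -Hm all_map.
  by move/negP; apply; apply: sub_all H.
have Hsz : size (pmap en ws) = size (ar s).
  by rewrite -(size_map Some) -map_some_pmap // size_map -Hs size_map.
rewrite rel_of_Dset //; apply: sat_coinc => v /(allP fD) vi.
apply: (@eq_in_map_in (fun y => en (sigw s ws y)) (updl env0 (xs G s) (pmap en ws)) (xs G s) v _ vi).
by rewrite updl_env0 // -map_some_pmap //; rewrite -[in RHS]Hm -map_comp.
Qed.


Definition rootat (a : gatom sg srt) (o : option 'I_NN) : gatom sg' srt :=
  existT (fun p : sym sg' => @wtup _ sg' _ srt p) (tag a, o) (tagged a).

Definition T (B : structure sg' srt) (X : structure sg srt) : structure sg srt :=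
  [set a : gatom sg srt | [exists i : 'I_(nu G (tag a)),
     sat X (updl env0 (xs G (tag a)) (tval (val (tagged a)))) (@chi _ _ _ G (tag a) i)
     && (rootat a (Some (widen_ord (nuN (tag a)) i)) \in B)]].

Lemma DsetS k B : Dset k.+1 B = T B (Dset k B).
Proof.
apply/setP => a; rewrite !inE /= sat_bigor; apply: eq_existsb => i /=.
set en := updl env0 _ _.
have Hsz : size (tval (val (tagged a))) = size (ar (tag a)) by rewrite size_tuple.
case: (pmap_someE (updl_env0 Hsz)) => -> ->.
rewrite (rel_ofE B (rootat a _)) /=; congr (_ && _).
have wc : wf (@chi _ _ _ G (tag a) i) by case: (@chi_wf _ _ _ G (tag a) i).
have fc : all (mem (xs G (tag a))) (fv (@chi _ _ _ G (tag a) i)) by case: (@chi_wf _ _ _ G (tag a) i).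
rewrite (@sat_tr _ _ _ _ sg sg' (Dset k B) B _ _ _ _ _ _ (fun y => en (sig0 y))) //.
- apply: sat_coinc => v /(allP fc) vi; by rewrite (sig0_id vi).
- by move=> c en' s ws c0 Hw Hs; apply: at_spec_k.
- exact: sig0_lt.
- exact: sig0_sort.
Qed.

Definition anc (S : sym sg) : {set sym sg} := [set Q | [exists Q', par G Q Q' && connect (par G) Q' S]].

Lemma anc_notin S : S \notin anc S.
Proof.
rewrite inE; apply/existsP => [[Q' /andP [p c]]].
by move: (par_acyclic p); rewrite c.
Qed.

Lemma anc_lt Q S : par G Q S -> (#|anc Q| < #|anc S|)%N.
Proof.
move=> pQS; apply: proper_card; apply/properP; split.
  apply/subsetP => Q2; rewrite !inE => /existsP [Q' /andP [p c]].
  apply/existsP; exists Q'; rewrite p /=.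
  by apply: connect_trans c (connect1 pQS).
exists Q; last exact: anc_notin.
by rewrite inE; apply/existsP; exists S; rewrite pQS connect0.
Qed.

Lemma anc_max S : (#|anc S| < #|sym sg|)%N.
Proof.
rewrite -cardsT; apply: proper_card; apply/properP; split; first exact: subsetT.
by exists S; [rewrite inE | exact: anc_notin].
Qed.

Lemma rel_of_agree (sg0 : signature Srt) (X X' : structure sg0 srt) s :
  (forall b : gatom sg0 srt, tag b = s -> (b \in X) = (b \in X')) -> rel_of X s =1 rel_of X' s.
Proof.
move=> H l; apply: eq_existsb => b.
by case: (tag b =P s) => [tb|tn]; [rewrite H | rewrite !andbF].
Qed.

Lemma iter_agree B k : forall (X X' : structure sg srt) (a : gatom sg srt), (#|anc (tag a)| < k)%N ->
  (a \in iter k (T B) X) = (a \in iter k (T B) X').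
Proof.
elim: k => [|k IH] X X' a //= Hk.
rewrite !inE; apply: eq_existsb => i; congr (_ && _).
apply: sat_syms => s si; apply: rel_of_agree => b tb; apply: IH; rewrite tb.
have sc : all (fun Q => par G Q (tag a)) (syms (@chi _ _ _ G (tag a) i)) by case: (@chi_wf _ _ _ G (tag a) i).
have := anc_lt (allP sc s si); lia.
Qed.

Lemma iter_const B (X X' : structure sg srt) : iter #|sym sg| (T B) X = iter #|sym sg| (T B) X'.
Proof. by apply/setP => a; apply: iter_agree; apply: anc_max. Qed.

Lemma Dset_iter B k : Dset k B = iter k (T B) set0.
Proof.
elim: k => [|k IH]; last by rewrite DsetS IH.
by apply/setP => a; rewrite !inE.
Qed.

Lemma Dset_fix B (A : structure sg srt) : (Dset #|sym sg| B = A) <-> (T B A = A).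
Proof.
rewrite Dset_iter; split => [<-|H].
  by rewrite -iterS iterSr (iter_const B (T B set0) set0).
rewrite (iter_const B set0 A).
by elim: #|sym sg| => //= n ->.
Qed.

Definition ind (b : bool) : R := if b then 1 else 0.

Lemma prod_ind (I : finType) (P : pred I) : \prod_(i : I) ind (P i) = ind [forall i, P i].
Proof.
case: (boolP [forall i, P i]) => [/forallP H|/forallPn [i Hi]].
  by rewrite /ind /=; apply: big1 => i _; rewrite H.
by rewrite (bigD1 i) //= /ind (negbTE Hi) mul0r.
Qed.

Lemma prod_option (T0 : finType) (F : option T0 -> R) : \prod_(o : option T0) F o = F None * \prod_(j : T0) F (Some j).
Proof.
rewrite (bigD1 None) //=; congr (_ * _).
rewrite (reindex_omap Some (fun o => o)) /=; last by case.
by apply: eq_bigl => j; rewrite eqxx.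
Qed.

Definition proj (a' : gatom sg' srt) : gatom sg srt :=
  existT (fun S => @wtup _ sg _ srt S) (tag a').1 (tagged a').

Lemma proj_rootat a o : proj (rootat a o) = a.
Proof. by case: a. Qed.

Lemma prod_split (F : gatom sg' srt -> R) :
  \prod_(a' : gatom sg' srt) F a' =
  \prod_(a : gatom sg srt) (F (rootat a None) * \prod_(j : 'I_NN) F (rootat a (Some j))).
Proof.
rewrite (reindex (fun p : (gatom sg srt * option 'I_NN)%type => rootat p.1 p.2)) /=.
  rewrite -(pair_bigA _ (fun a o => F (rootat a o))) /=.
  by apply: eq_bigr => a _; rewrite prod_option.
apply: onW_bij; exists (fun a' => (proj a', (tag a').2)).
  by case=> [[S w] o].
by case=> [[S o] w].
Qed.

Lemma sum_set_prod (I : finType) (F : I -> bool -> R) :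
  \sum_(B : {set I}) \prod_(i : I) F i (i \in B) = \prod_(i : I) (F i true + F i false).
Proof.
rewrite (eq_bigr (fun i => \sum_(b : bool) F i b)); last by move=> i _; rewrite big_bool.
rewrite bigA_distr_bigA /=.
rewrite (reindex (fun f : {ffun I -> bool} => [set i | f i])) /=.
  by apply: eq_bigr => f _; apply: eq_bigr => i _; rewrite inE.
apply: onW_bij; exists (fun B : {set I} => [ffun i => i \in B]).
  by move=> f; apply/ffunP => i; rewrite ffunE inE.
by move=> B; apply/setP => i; rewrite inE ffunE.
Qed.

Definition enA (a : gatom sg srt) := updl env0 (xs G (tag a)) (tval (val (tagged a))).

Lemma uniq_i0 (A : structure sg srt) (a : gatom sg srt) :
  exists i0 : 'I_(nu G (tag a)), forall i, sat A (enA a) (@chi _ _ _ G (tag a) i) = (i == i0).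
Proof.
have Hm : map srt (tval (val (tagged a))) = map snd (xs G (tag a)).
  by have [_ ->] := xsG_ok (tag a); apply/eqP; exact: (valP (tagged a)).
have [i0 H0] := @chi_cover _ _ _ G (tag a) E srt A _ Hm.
exists i0 => i; case: (eqVneq i i0) => [->|ne] //.
have := @chi_disj _ _ _ G (tag a) E srt A _ i i0 ne Hm.
by rewrite /enA H0 andbT => /negbTE.
Qed.

Definition cond (A : structure sg srt) (a : gatom sg srt) (j : 'I_NN) : bool :=
  oapp (fun i => sat A (enA a) (@chi _ _ _ G (tag a) i)) false (insub (val j)).

Lemma cond_eq A a i0 : (forall i, sat A (enA a) (@chi _ _ _ G (tag a) i) = (i == i0)) ->
  forall j, cond A a j = (j == widen_ord (nuN (tag a)) i0).
Proof.
move=> H j; rewrite /cond; case: insubP => [i lt vi|nlt] /=.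
  rewrite H; apply/eqP/eqP => e.
    by apply: val_inj; rewrite /= -vi e.
  by apply: val_inj; rewrite /= vi e.
apply/esym/negP => /eqP e; move: nlt; rewrite e /=.
by rewrite ltn_ord.
Qed.

Lemma prod_cond A a (X : 'I_NN -> R) i0 :
  (forall i, sat A (enA a) (@chi _ _ _ G (tag a) i) = (i == i0)) ->
  \prod_(j : 'I_NN) (if cond A a j then X j else 1) = X (widen_ord (nuN (tag a)) i0).
Proof.
move=> H; rewrite (eq_bigr (fun j => if j == widen_ord (nuN (tag a)) i0 then X j else 1)).
  by rewrite -big_mkcond big_pred1_eq.
by move=> j _; rewrite (cond_eq H).
Qed.

Lemma lbnG'_prod (B : structure sg' srt) :
  lbn_prob G' B = \prod_(a : gatom sg srt)
    (ind ((rootat a None \in B) == (a \in Dset #|sym sg| B)) *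
     \prod_(j : 'I_NN) (if rootat a (Some j) \in B then mu'' (tag a) j else 1 - mu'' (tag a) j)).
Proof.
rewrite /lbn_prob prod_split; apply: eq_bigr => a _; congr (_ * _).
  rewrite big_ord_recl big_ord1 /= /chi' /mu' /= inE /ind.
  case: sat; case: (_ \in B) => /=; rewrite ?subrr ?subr0 ?addr0 ?add0r //.
by apply: eq_bigr => j _; rewrite big_ord1.
Qed.

Lemma T_mem A B a i0 : (forall i, sat A (enA a) (@chi _ _ _ G (tag a) i) = (i == i0)) ->
  (a \in T B A) = (rootat a (Some (widen_ord (nuN (tag a)) i0)) \in B).
Proof.
move=> H; rewrite inE; apply/existsP/idP => [[i]|Hi].
  by rewrite -/(enA a) H => /andP [/eqP -> ->].
by exists i0; rewrite -/(enA a) H eqxx.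
Qed.

Lemma reductE (B : structure sg' srt) (A : structure sg srt) :
  is_reduct (fun S : sym sg => (S, None) : sym sg') B A = [forall a : gatom sg srt, (rootat a None \in B) == (a \in A)].
Proof.
apply/forallP/forallP => [H [S w]|H S].
  have := forallP (H S) (val w); rewrite eq_sym.
  by rewrite (rel_ofE A (existT _ S w)) (rel_ofE B (rootat (existT _ S w) None)).
apply/forallP => t.
case Hs: (map srt t == ar S); last first.
  case e1: (rel_of A S t); first by rewrite (rel_of_sorted e1) in Hs.
  case e2: (rel_of B (S, None) t) => //.
  by have := rel_of_sorted e2; rewrite /= Hs.
pose w : @wtup _ sg _ srt S := exist _ t Hs.
have := H (existT _ S w); rewrite eq_sym.
by rewrite -(rel_ofE A (existT _ S w)) -(rel_ofE B (rootat (existT _ S w) None)).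
Qed.

Definition g (A : structure sg srt) (a' : gatom sg' srt) (b : bool) : R :=
  match (tag a').2 with
  | None => ind (b == (proj a' \in A))
  | Some j => (if b then mu'' (tag a').1 j else 1 - mu'' (tag a').1 j) *
              (if cond A (proj a') j then ind (b == (proj a' \in A)) else 1)
  end.

Lemma g_None A a b : g A (rootat a None) b = ind (b == (a \in A)).
Proof. by case: a. Qed.
Lemma g_Some A a j b : g A (rootat a (Some j)) b =
  (if b then mu'' (tag a) j else 1 - mu'' (tag a) j) * (if cond A a j then ind (b == (a \in A)) else 1).
Proof. by case: a. Qed.

Lemma pointwise (A : structure sg srt) (B : structure sg' srt) :
  (if is_reduct (fun S : sym sg => (S, None) : sym sg') B A then lbn_prob G' B else 0) =
  \prod_(a' : gatom sg' srt) g A a' (a' \in B).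
Proof.
rewrite prod_split lbnG'_prod reductE.
set W := fun a : gatom sg srt => \prod_(j : 'I_NN) (if rootat a (Some j) \in B then mu'' (tag a) j else 1 - mu'' (tag a) j).
have E1 : forall a : gatom sg srt, g A (rootat a None) (rootat a None \in B) *
    \prod_(j : 'I_NN) g A (rootat a (Some j)) (rootat a (Some j) \in B) =
    ind ((rootat a None \in B) == (a \in A)) * (W a * ind ((a \in T B A) == (a \in A))).
  move=> a; rewrite /g /= !proj_rootat big_split /=; congr (_ * (_ * _)).
  have [i0 H] := uniq_i0 A a.
  by rewrite (prod_cond _ H) (T_mem _ H) proj_rootat.
under [in RHS]eq_bigr do rewrite E1.
rewrite !big_split /= !prod_ind.
case: ifP => Hx; last by rewrite /ind /= !mul0r.
rewrite /ind /=; set b1 := [forall a, _]; set b2 := [forall a, _].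
have -> : b1 = b2.
  have Hx' := forallP Hx.
  apply/forallP/forallP => H a.
    have HD : Dset #|sym sg| B = A.
      by apply/setP => a1; have := H a1; rewrite (eqP (Hx' a1)) => /eqP.
    by move/Dset_fix: HD => ->.
  have HT : T B A = A by apply/setP => a1; apply/eqP; exact: H.
  move/Dset_fix: HT => ->; exact: Hx' a.
by rewrite mul1r mulrC.
Qed.
End Sem.
End Constr.

Unset Implicit Arguments.
Local Open Scope ring_scope.
Theorem proposition1 (Srt : finType) (R : realType) (sg : signature Srt)
  (G : lbn R sg) :
  exists (sg' : signature Srt) (G' : lbn R sg') (iota : sym sg -> sym sg'),
    [/\ injective iota,
        (forall S : sym sg, ar (iota S) = ar S),
        (forall (E : finType) (srt : E -> Srt) (A : structure sg srt),
           lbn_prob G A = \sum_(B : structure sg' srt | is_reduct iota B A)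
                            lbn_prob G' B)
      & (forall S' : sym sg', is_root G' S' \/
           ((forall Q, par G' Q S' -> is_root G' Q) /\
            (forall i, @mu _ _ _ G' S' i = 0 \/ @mu _ _ _ G' S' i = 1)))].
Proof.
exists (sg' G), (G' G), (fun S => (S, None)); split.
- by move=> x y [].
- by [].
- move=> E srt A; rewrite big_mkcond /=.
  under eq_bigr do rewrite pointwise.
  rewrite sum_set_prod prod_split /lbn_prob; apply: eq_bigr => a _.
  have [i0 H] := uniq_i0 G A a.
  rewrite !g_None /ind.
  under [in RHS]eq_bigr do rewrite !g_Some.
  have -> : (if true == (a \in A) then 1 else 0) + (if false == (a \in A) then 1 else 0) = 1 :> R.
    by case: (a \in A); rewrite ?addr0 ?add0r.
  rewrite mul1r.
  rewrite (eq_bigr (fun j => if cond (G:=G) A a j then (if a \in A then mu'' (tag a) j else 1 - mu'' (tag a) j) else 1)); last first.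
    by move=> j _; case: (cond (G:=G) A a j); case: (a \in A) => /=; rewrite ?mulr1 ?mulr0 ?addr0 ?add0r //; rewrite addrC subrK.
  rewrite (prod_cond _ H).
  have -> : mu'' (tag a) (widen_ord (nuN G (tag a)) i0) = @mu _ _ _ G (tag a) i0.
    by rewrite /mu'' /= valK.
  rewrite (bigD1 i0) //= -/(enA G a) H eqxx big1 ?addr0 // => i ne.
  by rewrite -/(enA G a) H (negbTE ne).
- case=> S [j|]; [left | right].
    by move=> Q; rewrite /= /par' /= andbF.
  split.
    by case=> Q o /= /andP [qn _] Q'; rewrite /= /par' /= andbC; case: o qn.
  move=> i; rewrite /= /mu' /=; case: ifP; auto.
Qed.
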